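(* Let $k$ be a field, $n\ge3$, $A=k[X_1,\dots,X_{n-1}]$ with $\deg X_i=1$, $\mathfrak m=(X_1,\dots,X_{n-1})$, $d\ge1$, $f_1,\dots,f_n\in A_d$ nonzero, $I=(f_1,\dots,f_n)$, and $h:k[T_1,\dots,T_n]\to A$, $T_i\mapsto f_i$. Suppose $I$ is of linear type outside $V(\mathfrak m)$, and let $\eta$ be an integer such that $H^0_{\mathfrak m}(\mathrm{Sym}_A(I))_\nu=0$ for all $\nu\ge\eta$. Then $\mathrm{ann}_{k[T_1,\dots,T_n]}(\mathrm{Sym}_A(I)_\nu)=\ker(h)$ for all $\nu\ge\eta$.
   Context: $\mathrm{Sym}_A(I)=A[T_1,\dots,T_n]/\ker\alpha$, where $\alpha(T_i)=f_i$ and $\ker\alpha$ is generated by the $\sum b_iT_i$ with $b_i\in A$, $\sum b_if_i=0$; it is bigraded, and $\mathrm{Sym}_A(I)_\nu$ denotes its component of degree $\nu$ with respect to the grading of $A$ (the image of $A_\nu[T_1,\dots,T_n]$), a $k[T_1,\dots,T_n]$-module. $H^0_{\mathfrak m}(N)$ is the submodule of elements annihilated by a power of $\mathfrak m$. $I$ is of linear type outside $V(\mathfrak m)$ if for every prime $\mathfrak p\not\supseteq\mathfrak m$, $\mathrm{Sym}_{A_{\mathfrak p}}(I_{\mathfrak p})\to\mathrm{Rees}_{A_{\mathfrak p}}(I_{\mathfrak p})$ is an isomorphism. *)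

(* Defs.v *)
From HB Require Import structures.
From mathcomp Require Import all_boot all_order all_algebra.
From mathcomp Require Import mpoly.
Set Implicit Arguments. Unset Strict Implicit. Unset Printing Implicit Defensive.
Import Order.TTheory GRing.Theory.
Local Open Scope ring_scope.

Definition ideal_gen (R : comRingType) (S : R -> Prop) (x : R) : Prop :=
  exists (m : nat) (c g : 'I_m -> R), (forall i, S (g i)) /\ x = \sum_(i < m) c i * g i.

Definition prime_ideal (R : comRingType) (p : R -> Prop) : Prop :=
  [/\ p 0, (forall a b, p a -> p b -> p (a + b)),
      (forall a b, p b -> p (a * b)), ~ p 1 &
      (forall a b, p (a * b) -> p a \/ p b)].

Section Sym.
Variables (k : fieldType) (n : nat).

(* A = k[X_1,...,X_{n-1}] (standard grading),  k[T] = k[T_1,...,T_n],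
   A[T] = A[T_1,...,T_n] is {mpoly A[n]} (bigraded: X-degree from the
   coefficients, T-degree from the monomials). *)
Local Notation A := {mpoly k[n.-1]}.
Local Notation AT := {mpoly A[n]}.

Variable f : 'I_n -> A.

Definition mIdeal (a : A) : Prop := ideal_gen (fun x : A => exists i, x = 'X_i) a.

Definition hmap (P : {mpoly k[n]}) : A := mmap (@mpolyC _ k) f P.

(* k[T] -> A[T] (structure of k[T]-module on A[T]) *)
Definition embT (P : {mpoly k[n]}) : AT := map_mpoly (@mpolyC _ k) P.

Definition symrel (G : AT) : Prop :=
  exists b : 'I_n -> A, \sum_(i < n) b i * f i = 0 /\
                        G = \sum_(i < n) (b i)%:MP * 'X_i.

(* ker alpha, so that Sym_A(I) = A[T] / symKer *)
Definition symKer (G : AT) : Prop := ideal_gen symrel G.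

(* the map A[T] -> A[t], T_i |-> f_i t, whose image is Rees_A(I) *)
Definition reesMap (G : AT) : {poly A} :=
  mmap (fun a : A => a%:P) (fun i => (f i)%:P * 'X) G.

Definition Xhomog (nu : nat) (G : AT) : Prop :=
  forall m, G@_m \is nu.-homog.

(* I is of linear type outside V(m): for every prime p of A not containing m,
   Sym_{A_p}(I_p) = Sym_A(I)_p -> Rees_A(I)_p = Rees_{A_p}(I_p) is an iso,
   i.e. (the map being onto) every element of the kernel of
   Sym_A(I) -> Rees_A(I) is killed by some s not in p. *)
Definition linear_type_outside_m : Prop :=
  forall p : A -> Prop, prime_ideal p -> ~ (forall a, mIdeal a -> p a) ->
  forall G : AT, reesMap G = 0 -> exists s : A, ~ p s /\ symKer (s%:MP * G).

(* H^0_m(Sym_A(I))_nu = 0 : a class of X-degree nu killed by m^N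
   (generated by the monomials of degree N) is zero *)
Definition H0m_vanishes_at (nu : nat) : Prop :=
  forall G : AT, Xhomog nu G ->
  (exists N : nat, forall a : 'X_{1..n.-1}, mdeg a = N -> symKer (('X_[a] : A)%:MP * G)) ->
  symKer G.

Definition annSym (nu : nat) (P : {mpoly k[n]}) : Prop :=
  forall G : AT, Xhomog nu G -> symKer (embT P * G).

End Sym.

(* Main.v *)
Require Import Defs.
From HB Require Import structures.
From mathcomp Require Import all_boot all_order all_algebra.
From mathcomp Require Import mpoly.
From mathcomp Require Import boolp classical_sets.
From mathcomp Require Import ring.
Import GRing.Theory.
Local Open Scope ring_scope.
Set Implicit Arguments. Unset Strict Implicit. Unset Printing Implicit Defensive.

Section IdealGen.
Variables (R : comRingType) (S : R -> Prop).

Lemma ig0 : ideal_gen S 0.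
Proof. by exists 0%N, (fun _ => 0), (fun _ => 0); split; [case|rewrite big_ord0]. Qed.

Lemma igS g : S g -> ideal_gen S g.
Proof.
move=> Sg; exists 1%N, (fun _ => 1), (fun _ => g); split=> // .
by rewrite big_ord1 mul1r.
Qed.

Lemma igM a x : ideal_gen S x -> ideal_gen S (a * x).
Proof.
case=> m [c [g [Sg ->]]]; exists m, (fun i => a * c i), g; split=> //.
by rewrite mulr_sumr; apply: eq_bigr => i _; rewrite mulrA.
Qed.

Lemma igD x y : ideal_gen S x -> ideal_gen S y -> ideal_gen S (x + y).
Proof.
case=> m1 [c1 [g1 [Sg1 ->]]]; case=> m2 [c2 [g2 [Sg2 ->]]].
pose c i := match split i with inl j => c1 j | inr j => c2 j end.
pose g i := match split i with inl j => g1 j | inr j => g2 j end.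
exists (m1 + m2)%N, c, g; split.
  by move=> i; rewrite /g; case: (split i).
rewrite big_split_ord /=; congr (_ + _); apply: eq_bigr => i _;
  by rewrite /c /g ?(unsplitK (inl _ : 'I_m1 + 'I_m2)) ?(unsplitK (inr _ : 'I_m1 + 'I_m2)).
Qed.

Lemma ig_sum (I : Type) (r : seq I) (F : I -> R) :
  (forall i, ideal_gen S (F i)) -> ideal_gen S (\sum_(i <- r) F i).
Proof.
move=> HF; elim: r => [|x r IH]; first by rewrite big_nil; exact: ig0.
by rewrite big_cons; apply: igD.
Qed.

End IdealGen.

Definition is_ideal (R : comRingType) (J : R -> Prop) :=
  [/\ J 0, (forall a b, J a -> J b -> J (a + b)) & (forall a b, J b -> J (a * b))].

Lemma exists_prime (R : comRingType) (J : R -> Prop) (x : R) :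
  is_ideal J -> (forall k, ~ J (x ^+ k)) ->
  exists p, prime_ideal p /\ (forall a, J a -> p a) /\ ~ p x.
Proof.
move=> IJ NJ.
pose Pg (X : set R) := X = set0 \/
  (is_ideal X /\ (forall a, J a -> X a) /\ forall k, ~ X (x ^+ k)).
have [|A [PA maxA]] := @Zorn_bigcup R Pg.
  move=> F FP Ftot.
  have hI X a : F X -> X a ->
      is_ideal X /\ (forall a, J a -> X a) /\ forall k, ~ X (x ^+ k).
    move=> FX Xa; case: (FP X FX) => // X0; by rewrite X0 in Xa.
  case: (pselect (exists X, F X /\ exists a, X a)) => [[X0 [FX0 [a0 X0a0]]]|none].
    right; have [[I0 _ _] [JX0 _]] := hI X0 a0 FX0 X0a0.
    split; [split|split].
    - by exists X0.
    - move=> a b [X FX Xa] [Y FY Yb].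
      case: (Ftot X Y FX FY) => [XY|YX].
        exists Y => //; have [[_ ID _] _] := hI Y b FY Yb; apply: ID => //; exact: XY.
      exists X => //; have [[_ ID _] _] := hI X a FX Xa; apply: ID => //; exact: YX.
    - move=> a b [X FX Xb]; exists X => //.
      by have [[_ _ IM] _] := hI X b FX Xb; apply: IM.
    - by move=> a Ja; exists X0 => //; apply: JX0.
    - move=> k [X FX Xk]; have [_ [_ NX]] := hI X _ FX Xk; exact: NX Xk.
  left; apply: funext => a; apply: propext; split => // -[X FX Xa].
  by apply: none; exists X; split => //; exists a.
case: PA => [A0|[IA [JA NA]]].
  exfalso; apply: (maxA J); last by right; split => //; split.
  rewrite A0; split => // JS; have := JS 0; case: IJ => J0 _ _; exact.
have [A0 AD AM] := IA.
have key a : ~ A a -> exists k r z, A z /\ x ^+ k = z + r * a.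
  move=> NAa.
  pose B y := exists r z, A z /\ y = z + r * a.
  apply: contrapT => Hno; apply: (maxA B).
    split; first by move=> y Ay; exists 0, y; rewrite mul0r addr0.
    move=> BA; apply: NAa; apply: BA; exists 1, 0; by rewrite add0r mul1r.
  right; split; [split|split].
  - by exists 0, 0; rewrite mul0r addr0.
  - move=> y1 y2 [r1 [z1 [Az1 ->]]] [r2 [z2 [Az2 ->]]].
    exists (r1 + r2), (z1 + z2); split; first exact: AD.
    by rewrite mulrDl !addrA [z1 + z2 + _]addrAC -!addrA.
  - move=> c y [r [z [Az ->]]]; exists (c * r), (c * z); split; first exact: AM.
    by rewrite mulrDr mulrA.
  - move=> y Jy; exists 0, y; split; [exact: JA | by rewrite mul0r addr0].
  - move=> k [r [z [Az Ek]]]; apply: Hno; by exists k, r, z.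
exists A; split; last split => //.
- split => //.
  + by move=> A1; apply: (NA 0%N); rewrite expr0.
  + move=> a b Aab; apply: contrapT => /not_orP [NAa NAb].
    have [k [r1 [z1 [Az1 E1]]]] := key a NAa.
    have [l [r2 [z2 [Az2 E2]]]] := key b NAb.
    apply: (NA (k + l)%N).
    have -> : x ^+ (k + l) = x ^+ l * z1 + (r1 * a) * z2 + (r1 * r2) * (a * b).
      by rewrite exprD E1 E2; ring.
    apply: (AD); first apply: (AD); by apply: (AM).
- by move=> Ax; apply: (NA 1%N); rewrite expr1.
Qed.

Lemma mmap_morph (R S S' : ringType) (m : nat) (g : R -> S) (h : 'I_m -> S)
  (phi : S -> S') : phi 0 = 0 -> {morph phi : x y / x + y} -> phi 1 = 1 ->
  {morph phi : x y / x * y} ->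
  forall P : {mpoly R[m]}, phi (mmap g h P) = mmap (phi \o g) (phi \o h) P.
Proof.
move=> p0 pD p1 pM P; rewrite /mmap (big_morph phi pD p0); apply: eq_bigr => mm _.
rewrite pM /mmap1 (big_morph phi pM p1); congr (_ * _); apply: eq_bigr => i _.
elim: (mm i) => [|e IH]; first by rewrite !expr0.
by rewrite !exprS pM IH.
Qed.

Arguments mmap_morph [R S S' m g h] phi _ _ _ _ P.

Lemma mmap_ext (R S : ringType) (m : nat) (g1 g2 : R -> S) (h1 h2 : 'I_m -> S) :
  g1 =1 g2 -> h1 =1 h2 -> forall P : {mpoly R[m]}, mmap g1 h1 P = mmap g2 h2 P.
Proof.
move=> eg eh P; rewrite /mmap; apply: eq_bigr => mm _; rewrite eg; congr (_ * _).
exact: mmap1_eq.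
Qed.

Section Main.
Variables (k : fieldType) (n : nat) (f : 'I_n -> {mpoly k[n.-1]}).
Local Notation A := {mpoly k[n.-1]}.
Local Notation AT := {mpoly A[n]}.

Lemma reesD x y : reesMap f (x + y) = reesMap f x + reesMap f y.
Proof. by rewrite /reesMap rmorphD. Qed.
Lemma reesM x y : reesMap f (x * y) = reesMap f x * reesMap f y.
Proof. by rewrite /reesMap rmorphM. Qed.
Lemma rees0 : reesMap f 0 = 0.
Proof. by rewrite /reesMap rmorph0. Qed.
Lemma rees1 : reesMap f 1 = 1.
Proof. by rewrite /reesMap rmorph1. Qed.
Lemma reesC c : reesMap f c%:MP = c%:P.
Proof. by rewrite /reesMap mmapC. Qed.
Lemma reesX i : reesMap f 'X_i = (f i)%:P * 'X.
Proof. by rewrite /reesMap mmapX mmap1U. Qed.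

Lemma rees_symKer G : symKer f G -> reesMap f G = 0.
Proof.
case=> m [c [g [Sg ->]]]; rewrite (big_morph _ (@reesD) (@rees0)) big1 // => i _.
rewrite reesM; have [b [Hb ->]] := Sg i.
rewrite (big_morph _ (@reesD) (@rees0)).
have -> : \sum_(j < n) reesMap f ((b j)%:MP * 'X_j) = (\sum_(j < n) b j * f j)%:P * 'X.
  rewrite rmorph_sum /= mulr_suml; apply: eq_bigr => j _.
  by rewrite reesM reesC reesX rmorphM /= mulrA.
by rewrite Hb mul0r mulr0.
Qed.

Definition Qm (P : {mpoly k[n]}) : {poly A} :=
  mmap (polyC \o (@mpolyC _ k)) (fun i => (f i)%:P * 'X) P.

Lemma rees_embT P : reesMap f (embT P) = Qm P.
Proof.
rewrite /embT /map_mpoly (mmap_morph (reesMap f)); last 4 first.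
- exact: rees0.
- exact: reesD.
- exact: rees1.
- exact: reesM.
by apply: mmap_ext => [c|i] /=; rewrite ?reesC ?reesX.
Qed.

Lemma Qm_eval1 P : (Qm P).[1] = hmap f P.
Proof.
rewrite /Qm (mmap_morph (fun q : {poly A} => q.[1])); last 4 first.
- exact: horner0.
- by move=> x y; rewrite hornerD.
- exact: hornerC.
- by move=> x y; rewrite hornerM.
by apply: mmap_ext => [c|i] /=; rewrite ?hornerC // hornerMX hornerC mulr1.
Qed.

Definition psi (a : A) : {poly A} :=
  mmap (polyC \o (@mpolyC _ k)) (fun j => ('X_j : A)%:P * 'X) a.

Lemma psi_homog e (a : A) : a \is e.-homog -> psi a = a%:P * 'X^e.
Proof.
move=> /dhomogP ha; rewrite /psi /mmap [in RHS](mpolyE a) rmorph_sum /= mulr_suml.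
rewrite !big_seq; apply: eq_bigr => m ma.
rewrite -(ha m ma) /mmap1 /=.
under eq_bigr do rewrite exprMn.
rewrite big_split /= prodrXr -mdegE -mul_mpolyC rmorphM /= -mulrA; congr (_ * _).
by rewrite mpolyXE_id rmorph_prod; congr (_ * _); apply: eq_bigr => i _; rewrite rmorphXn.
Qed.

Variables (d : nat) (hd : (0 < d)%N) (hf : forall i, f i \is d.-homog).

Lemma Qm_zero P : hmap f P = 0 -> Qm P = 0.
Proof.
move=> hP.
have E1 : psi (hmap f P) = mmap (polyC \o (@mpolyC _ k)) (fun i => (f i)%:P * 'X^d) P.
  rewrite /hmap (mmap_morph (psi)); last 4 first.
  - by rewrite /psi rmorph0.
  - by move=> x y; rewrite /psi rmorphD.
  - by rewrite /psi rmorph1.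
  - by move=> x y; rewrite /psi rmorphM.
  by apply: mmap_ext => [c|i] /=; [rewrite /psi mmapC | rewrite (psi_homog (hf i))].
have E2 : (Qm P) \Po 'X^d = mmap (polyC \o (@mpolyC _ k)) (fun i => (f i)%:P * 'X^d) P.
  rewrite /Qm (mmap_morph (fun q : {poly A} => q \Po 'X^d)); last 4 first.
  - exact: comp_poly0.
  - by move=> x y; rewrite comp_polyD.
  - exact: comp_polyC.
  - by move=> x y; rewrite comp_polyM.
  by apply: mmap_ext => [c|i] /=; rewrite ?comp_polyC // comp_polyM comp_polyC comp_polyX.
apply/eqP; rewrite -(@comp_poly_eq0 _ _ ('X^d)); last by rewrite size_polyXn ltnS.
by rewrite E2 -E1 hP /psi rmorph0.
Qed.


Lemma Xhomog_embT nu (P : {mpoly k[n]}) (G : AT) : Xhomog nu G -> Xhomog nu (embT P * G).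
Proof.
move=> hG m; rewrite mcoeffM; apply: rpred_sum => kk _.
rewrite /embT mcoeff_map_mpoly /= mul_mpolyC; apply: rpredZ; exact: hG.
Qed.

Lemma Xhomog_C nu (a : A) : a \is nu.-homog -> @Xhomog k n nu (a%:MP : AT).
Proof.
move=> ha m; rewrite mcoeffC; case: (m == 0%MM); first by rewrite mulr1.
by rewrite mulr0 rpred0.
Qed.

Hypothesis hlin : linear_type_outside_m f.

Lemma Hpow H : reesMap f H = 0 -> forall i : 'I_n.-1,
  exists e, symKer f (((('X_i : A) ^+ e)%:MP) * H).
Proof.
move=> hH i; apply: contrapT => Hno.
pose J (s : A) := symKer f (s%:MP * H).
have IJ : is_ideal J.
  split.
  - by rewrite /J mpolyC0 mul0r; exact: ig0.
  - by move=> a b Ja Jb; rewrite /J mpolyCD mulrDl; exact: igD.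
  - by move=> a b Jb; rewrite /J mpolyCM -mulrA; exact: igM.
have [p [pp [Jp npx]]] := @exists_prime _ J ('X_i) IJ
  (fun e Je => Hno (ex_intro _ e Je)).
have [|s [nps Js]] := hlin pp _ hH.
  by move=> all; apply: npx; apply: all; apply: igS; exists i.
by apply: nps; apply: Jp.
Qed.

Lemma HN H : reesMap f H = 0 -> (0 < n.-1)%N -> exists N,
  forall a : 'X_{1..n.-1}, mdeg a = N -> symKer f ((('X_[a] : A)%:MP) * H).
Proof.
move=> hH npos; have [ef hef] := choice (Hpow hH).
exists (\sum_(i < n.-1) ef i)%N => a ha.
case: (boolP [exists i, ef i <= a i]%N) => [/existsP [i hi] | /existsPn hno].
  have -> : a = ((a - U_(i) *+ ef i) + U_(i) *+ ef i)%MM.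
    apply/mnmP => j; rewrite mnmDE mnmBE mulmnE mnm1E.
    case: (eqVneq i j) => [<-|_]; first by rewrite mul1n subnK.
    by rewrite mul0n subn0 addn0.
  rewrite mpolyXD -mpolyXn mpolyCM -mulrA; apply: igM; exact: hef.
exfalso; move: ha; rewrite mdegE => ha.
have : (\sum_(i < n.-1) (a i).+1 <= \sum_(i < n.-1) ef i)%N.
  by apply: leq_sum => i _; rewrite ltnNge hno.
under eq_bigr do rewrite -addn1.
rewrite -ha big_split /= sum_nat_const card_ord muln1.
by rewrite -{2}(addn0 (\sum_(i < n.-1) a i)) leq_add2l leqNgt npos.
Qed.

End Main.


Lemma mpolyX_neq0 (k : fieldType) (m : nat) (a : 'X_{1..m}) : ('X_[a] : {mpoly k[m]}) != 0.
Proof.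
apply/eqP => /(congr1 (mcoeff a)); rewrite mcoeffX eqxx mcoeff0 => /eqP.
by rewrite oner_eq0.
Qed.

Theorem mainTheorem14 (k : fieldType) (n : nat) (hn : (3 <= n)%N)
  (d : nat) (hd : (1 <= d)%N) (f : 'I_n -> {mpoly k[n.-1]})
  (hf : forall i, f i \is d.-homog) (hf0 : forall i, f i != 0)
  (hlin : linear_type_outside_m f) (eta : int)
  (hH0 : forall nu : nat, (eta <= nu%:Z)%R -> H0m_vanishes_at f nu) :
  forall nu : nat, (eta <= nu%:Z)%R ->
    forall P : {mpoly k[n]}, annSym f nu P <-> hmap f P = 0.
Proof.
move=> nu hnu P.
have npos : (0 < n.-1)%N by rewrite -subn1 subn_gt0 (leq_trans _ hn).
split.
- move=> annP.
  pose i0 : 'I_n.-1 := Ordinal npos.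
  pose am : 'X_{1..n.-1} := (U_(i0) *+ nu)%MM.
  have hG : Xhomog nu ((('X_[am] : {mpoly k[n.-1]}))%:MP : {mpoly {mpoly k[n.-1]}[n]}).
    by apply: Xhomog_C; rewrite dhomogX /am; apply/eqP; rewrite /= mdegMn mdeg1 mul1n.
  have := rees_symKer (annP _ hG).
  rewrite reesM rees_embT reesC => /eqP; rewrite mulf_eq0 polyC_eq0 (negbTE (mpolyX_neq0 _ _)) orbF.
  by move=> /eqP hQ; rewrite -Qm_eval1 hQ horner0.
- move=> hP G hG.
  have hR : reesMap f (embT P * G) = 0.
    by rewrite reesM rees_embT (Qm_zero hd hf hP) mul0r.
  apply: (hH0 nu hnu); first exact: Xhomog_embT.
  exact: HN.
Qed.
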